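(* Under the standing assumptions, if $g$ is e-convex, then $$v(P)\ \ge\ v(\bar D^F)\ \ge\ v(D^F).$$
   Context: Let $X$ be a nontrivial separated locally convex space with topological dual $X^*$, endowed with the topology $\sigma(X,X^* )$; $\langle x,x^*\rangle$ is the value of $x^*\in X^*$ at $x\in X$. Put $W:=X^*\times X^*\times\mathbb{R}$, $\mathbb{R}_{++}:=]0,+\infty[$ and $Z:=X^*\times X^*\times\mathbb{R}_{++}$. For $y^*\in X^*$, $\alpha\in\mathbb{R}$, let $H^-_{y^*,\alpha}:=\{x\in X:\langle x,y^*\rangle<\alpha\}$. The coupling function $c:X\times W\to\overline{\mathbb{R}}$ is $c(x,(x^*,y^*,\alpha)):=\langle x,x^*\rangle$ if $\langle x,y^*\rangle<\alpha$ and $:=+\infty$ otherwise; $c'((x^*,y^*,\alpha),x):=c(x,(x^*,y^*,\alpha))$. For $h:X\to\overline{\mathbb{R}}$ its $c$-conjugate is $h^c:W\to\overline{\mathbb{R}}$, $h^c(w):=\sup_{x\in X}\{c(x,w)-h(x)\}$; for $k:W\to\overline{\mathbb{R}}$, $k^{c'}(x):=\sup_{w\in W}\{c'(w,x)-k(w)\}$. In these conjugations the convention $(+\infty)+(-\infty)=(-\infty)+(+\infty)=(+\infty)-(+\infty)=(-\infty)-(-\infty)=-\infty$ is used (so for proper $h$, $h^c(x^*,y^*,\alpha)=h^*(x^* )$ if $\operatorname{dom}h\subseteq H^-_{y^*,\alpha}$ and $+\infty$ otherwise, $h^*$ the Fenchel conjugate). $\operatorname{dom}$ and $\operatorname{epi}$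 denote effective domain and epigraph; $\delta_A$ is the indicator function of $A$ ($0$ on $A$, $+\infty$ outside). A set $C\subseteq X$ is e-convex if for every $x_0\notin C$ there is $x^*\in X^*$ with $\langle x-x_0,x^*\rangle<0$ for all $x\in C$; a function is e-convex if its epigraph is e-convex in $X\times\mathbb{R}$. Standing assumptions: $f,g:X\to\overline{\mathbb{R}}$ are proper convex functions with $\operatorname{dom}f\subseteq\operatorname{dom}g$, $A\subseteq X$ is nonempty, and in the objective $f-g$ the convention $(+\infty)-(+\infty)=+\infty$ is used. The primal problem $(P)$ is $\inf_{x\in A}\{f(x)-g(x)\}$, with value $v(P)=\inf_{x\in X}\{f(x)-g(x)+\delta_A(x)\}$. For $(u^*,v^*,\gamma),(x^*,y^*,\alpha)\in W$ set $\varphi(u^*,v^*,\gamma;x^*,y^*,\alpha):=g^c(u^*,v^*,\gamma)-f^c(u^*-x^*,-y^*,\alpha)-\delta_A^c(x^*,y^*,\alpha)$. The dual problems are $(D^F)$: $v(D^F):=\sup_{(x^*,y^*,\alpha)\in Z}\ \inf_{(u^*,v^*,\gamma)\in\operatorname{dom}g^c}\varphi(u^*,v^*,\gamma;x^*,y^*,\alpha)$, and $(\bar D^F)$: $v(\bar D^F):=\inf_{(u^*,v^*,\gamma)\in\operatorname{dom}g^c}\ \sup_{(x^*,y^*,\alpha)\in Z}\varphi(u^*,v^*,\gamma;x^*,y^*,\alpha)$. *)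

(* Defs.v *)
From HB Require Import structures.
From mathcomp Require Import all_boot all_order all_algebra.
From mathcomp Require Import all_classical all_reals.
From mathcomp Require Import ereal topology normedtype tvs.
Set Implicit Arguments. Unset Strict Implicit. Unset Printing Implicit Defensive.
Import Order.TTheory GRing.Theory Num.Theory numFieldTopology.Exports numFieldNormedType.Exports.
Local Open Scope classical_set_scope.
Local Open Scope ring_scope.

Section Defs.
Variable R : realType.

Definition is_dual (E : tvsType R) (xs : E -> R) : Prop :=
  (forall (a : R) (x y : E), xs (a *: x + y) = a * xs x + xs y) /\ continuous xs.

Definition convex_subset (V : lmodType R) (C : set V) : Prop :=
  forall x y, C x -> C y -> forall t : R, 0 <= t -> t <= 1 ->
    C (t *: x + (1 - t) *: y).

Definition e_convex_set (E : tvsType R) (C : set E) : Prop :=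
  forall x0, ~ C x0 -> exists xs : E -> R, is_dual xs /\
    forall x, C x -> xs (x - x0) < 0.

Variable X : tvsType R.

Definition dom (h : X -> \bar R) : set X := [set x | (h x < +oo)%E].
Definition epi (h : X -> \bar R) : set (X * R^o)%type :=
  [set p | (h p.1 <= p.2%:E)%E].
Definition proper_fun (h : X -> \bar R) : Prop :=
  (exists x, (h x < +oo)%E) /\ (forall x, h x != -oo%E).
Definition convex_fun (h : X -> \bar R) : Prop := convex_subset (epi h).
Definition e_convex_fun (h : X -> \bar R) : Prop := e_convex_set (epi h).
Definition indicator (A : set X) : X -> \bar R :=
  fun x => if `[< A x >] then 0%E else +oo%E.

(* W = X^* x X^* x R, elements represented as triples (x*, y*, alpha) *)
Definition Wt : Type := ((X -> R) * (X -> R) * R)%type.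
Definition inW (w : Wt) : Prop := is_dual w.1.1 /\ is_dual w.1.2.
Definition inZ (w : Wt) : Prop := inW w /\ 0 < w.2.

Definition coupling (x : X) (w : Wt) : \bar R :=
  if w.1.2 x < w.2 then (w.1.1 x)%:E else +oo%E.

(* c-conjugate (mathcomp's + satisfies +oo + -oo = -oo) *)
Definition cconj (h : X -> \bar R) (w : Wt) : \bar R :=
  ereal_sup [set (coupling x w - h x)%E | x in [set: X]].

Definition domW (k : Wt -> \bar R) : set Wt :=
  [set w | inW w /\ (k w < +oo)%E].

(* objective value with (+oo)-(+oo) = +oo : dual addition *)
Definition vP (f g : X -> \bar R) (A : set X) : \bar R :=
  ereal_inf [set dual_adde (dual_adde (f x) (- g x)) (indicator A x) | x in [set: X]].

Definition phi (f g : X -> \bar R) (A : set X) (u w : Wt) : \bar R :=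
  (cconj g u - cconj f ((fun z => u.1.1 z - w.1.1 z)%R, (fun z => - w.1.2 z)%R, w.2)
     - cconj (indicator A) w)%E.

Definition vDF (f g : X -> \bar R) (A : set X) : \bar R :=
  ereal_sup [set ereal_inf [set phi f g A u w | u in domW (cconj g)] | w in inZ].

Definition vDFbar (f g : X -> \bar R) (A : set X) : \bar R :=
  ereal_inf [set ereal_sup [set phi f g A u w | w in inZ] | u in domW (cconj g)].

End Defs.

(* Main.v *)
Require Import Defs.
From HB Require Import structures.
From mathcomp Require Import all_boot all_order all_algebra.
From mathcomp Require Import all_classical all_reals.
From mathcomp Require Import ereal topology normedtype tvs.
From mathcomp Require Import lra.
Import Order.TTheory GRing.Theory Num.Theory numFieldTopology.Exports numFieldNormedType.Exports.
Local Open Scope classical_set_scope.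
Local Open Scope ring_scope.

Section Helpers.
Variable R : realType.

Lemma dual0 (E : tvsType R) (xs : E -> R) : is_dual xs -> xs 0 = 0.
Proof.
move=> [lin _]; have := lin 1 0 0; rewrite scale1r addr0 mul1r => h.
by move: h; lra.
Qed.

Lemma dualD (E : tvsType R) (xs : E -> R) : is_dual xs -> forall p q, xs (p + q) = xs p + xs q.
Proof. by move=> [lin _] p q; have := lin 1 p q; rewrite scale1r mul1r. Qed.

Lemma dualZ (E : tvsType R) (xs : E -> R) : is_dual xs -> forall k p, xs (k *: p) = k * xs p.
Proof. by move=> d k p; have := d.1 k p 0; rewrite !addr0 (@dual0 _ _ d) addr0. Qed.

Lemma dual_cst0 (E : tvsType R) : is_dual (fun _ : E => (0 : R)).
Proof. by split; [move=> *; rewrite mulr0 addr0 | exact: cst_continuous]. Qed.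

End Helpers.
Arguments dual0 {R E xs}.
Arguments dualD {R E xs}.
Arguments dualZ {R E xs}.
Arguments dual_cst0 {R E}.
Section Helpers2.
Variable R : realType.
Variable X : tvsType R.

Lemma minorant (g : X -> \bar R) (Hge : e_convex_fun g) (x : X) (q e : R) :
  g x = q%:E -> 0 < e ->
  exists l : X -> R, is_dual l /\
    forall z t, (g z <= t%:E)%E -> l z - l x < t - (q - e).
Proof.
move=> gx e0.
have nepi : ~ epi g (x, q - e).
  by rewrite /epi /= gx lee_fin; lra.
have [xs [dxs H]] := Hge _ nepi.
set s := xs (0, 1).
set a := fun z : X => xs (z, 0).
have dec : forall (z : X) (t : R), xs (z, t) = a z + t * s.
  move=> z t; rewrite /a /s -(dualZ dxs) -(dualD dxs); congr xs.
  by apply: injective_projections => /=; rewrite ?scaler0 ?addr0 ?add0r //; change (t = t * 1); rewrite mulr1.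
have a0 : a 0 = 0 by rewrite /a (dual0 dxs).
have s0 : s < 0.
  have := H (x, q); rewrite /epi /= gx lee_fin lexx => /(_ isT).
  have -> : ((x, q) : X * R^o) - (x, q - e) = (0, e).
    apply: injective_projections => /=; first by rewrite subrr.
    change (q - (q - e) = e); lra.
  by rewrite dec a0 add0r pmulr_rlt0.
have alin : forall (k : R) (z y : X), a (k *: z + y) = k * a z + a y.
  move=> k z y; rewrite /a -(dualZ dxs) -(dualD dxs); congr xs.
  by apply: injective_projections => //=; rewrite ?scaler0 ?addr0 //.
pose l := fun z => a z * (- s)^-1.
have dl : is_dual l.
  split.
    by move=> k z y; rewrite /l alin mulrDl mulrA.
  move=> z; apply: (continuous_comp (f := a) (g := fun r : R => r * (- s)^-1)); last exact: mulrr_continuous.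
  apply: (continuous_comp (f := fun z : X => ((z, 0) : X * R^o))); last exact: dxs.2.
  exact: (cvg_pair (f := id) (g := fun _ => (0 : R^o)) cvg_id (cvg_cst _)).
exists l; split => // z t gzt.
have := H (z, t); rewrite /epi /= gzt => /(_ isT).
have -> : ((z, t) : X * R^o) - (x, q - e) = (z - x, t - (q - e)) by [].
rewrite dec.
have -> : a (z - x) = a z - a x.
  have := alin (-1) x z; rewrite scaleN1r mulN1r addrC => ->; by rewrite addrC.
move=> h.
rewrite /l -mulrBl ltr_pdivrMr ?oppr_gt0 //.
rewrite mulrN; lra.
Qed.

End Helpers2.
Arguments minorant {R X g}.

Theorem mainTheorem1 (R : realType) (X : tvsType R)
  (HX : hausdorff_space X) (Hnt : exists x : X, x != 0)
  (f g : X -> \bar R) (A : set X)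
  (Hf : proper_fun f) (Hg : proper_fun g)
  (Hfc : convex_fun f) (Hgc : convex_fun g)
  (Hdom : dom f `<=` dom g) (HA : A !=set0)
  (Hge : e_convex_fun g) :
  (vDFbar f g A <= vP f g A)%E /\ (vDF f g A <= vDFbar f g A)%E.
Proof.
split.
- rewrite /vP; apply: le_ereal_inf_tmp => _ [x _ <-].
  case: (pselect (A x)) => Ax; last first.
    by rewrite /indicator asboolF //; case: (dual_adde (f x) _) => [r| |] /=; rewrite leey.
  case Hfx: (f x) => [r| |]; last by have := Hf.2 x; rewrite Hfx.
    2: by rewrite /= leey.
  have : dom g x by apply: Hdom; rewrite /dom /= Hfx ltry.
  rewrite /dom /=.
  case Hgx: (g x) => [q| |] // _; last by have := Hg.2 x; rewrite Hgx.
  rewrite /indicator asboolT //=.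
  apply/lee_addgt0Pr => e e0.
  have [l [dl Hl]] := minorant Hge x q e Hgx e0.
  pose u : Wt X := (l, (fun _ => 0), 1).
  have Gu : (cconj g u <= (l x - (q - e))%:E)%E.
    apply: ge_ereal_sup => _ [z _ <-].
    rewrite /coupling /= ltr01.
    case Hgz: (g z) => [t| |].
    - rewrite -EFinB lee_fin; have := Hl z t; rewrite Hgz lee_fin lexx => /(_ isT); lra.
    - by rewrite /= leNye.
    - by have := Hg.2 z; rewrite Hgz.
  have udom : domW (cconj g) u.
    split; first by split; [exact: dl | exact: dual_cst0].
    exact: (le_lt_trans Gu (ltry _)).
  apply: ge_ereal_inf; exists (ereal_sup [set phi f g A u w | w in inZ (X:=X)]).
    by exists u.
  apply: ge_ereal_sup => _ [[[xs ys] al] Zw <-].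
  have hF := ereal_sup_ubound
    (ex_intro2 _ _ x I erefl : [set (coupling x0 ((fun z => u.1.1 z - xs z)%R, (fun z => - ys z)%R, al) - f x0)%E | x0 in [set: X]] _).
  have hD := ereal_sup_ubound
    (ex_intro2 _ _ x I erefl : [set (coupling x0 (xs, ys, al) - indicator A x0)%E | x0 in [set: X]] _).
  rewrite /phi; apply: le_trans (leeB (leeB Gu hF) hD) _.
  rewrite Hfx /indicator asboolT // /coupling /=.
  case: ifP => h1; case: ifP => h2.
  + rewrite sube0 -!EFinB -EFinD lee_fin; lra.
  + by rewrite /= leNye.
  + by rewrite /= leNye.
  + by rewrite /= leNye.
- rewrite /vDF /vDFbar.
  apply: ge_ereal_sup => _ [w Zw <-].
  apply: le_ereal_inf_tmp => _ [u du <-].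
  apply: ge_ereal_inf; exists (phi f g A u w); first by exists u.
  apply: le_ereal_sup_tmp; exists (phi f g A u w) => //; by exists w.
Qed.
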